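(* Let $(\mathbb{X},\oplus,\otimes,\mathbb{0},\mathbb{1})$ be a linearly ordered, algebraically complete idempotent semifield, and let $\bm{A}_1,\ldots,\bm{A}_m\in\mathbb{X}^{n\times n}$ be matrices such that $\bm{B}=\bm{A}_{1}\oplus\bm{A}_{1}^{-}\oplus\cdots\oplus\bm{A}_{m}\oplus\bm{A}_{m}^{-}$ has no zero entries. Let $\mu$ be the spectral radius of $\bm{B}$ and $\bm{B}_{\mu}=\mu^{-1}\bm{B}$. Consider the problem of minimizing $\max_{1\le i\le m} d(\bm{A}_i,\bm{x}\bm{x}^{-})$ (maximum with respect to the order of $\mathbb{X}$, i.e. $\bigoplus_{i=1}^m d(\bm{A}_i,\bm{x}\bm{x}^{-})$) over all regular vectors $\bm{x}\in\mathbb{X}^n$. Then the minimum value equals $\mu$, and the set of all solutions is $\{\bm{x}=\bm{B}_{\mu}^{\ast}\bm{u}:\bm{u}\in\mathbb{X}^n,\ \bm{u}\ne\bm{0}\}$.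
   Context: An idempotent semifield is a set $\mathbb{X}$ with associative, commutative operations $\oplus$ (addition) and $\otimes$ (multiplication, usually omitted in writing) with neutral elements $\mathbb{0}$ and $\mathbb{1}$, multiplication distributing over addition, idempotent addition ($x\oplus x=x$), and every nonzero $x$ having an inverse $x^{-1}$ with $xx^{-1}=\mathbb{1}$. It is assumed linearly ordered by the order $x\le y \iff x\oplus y=y$, and algebraically complete: $x^p=a$ is solvable for every $a$ and integer $p>0$, so rational powers are defined. Matrix and vector operations use the usual formulas with $\oplus,\otimes$ in place of $+,\times$; $\bm{0}$ is the zero vector; a vector is regular if it has no zero entries. For a nonzero column vector $\bm{x}=(x_i)$, $\bm{x}^{-}$ is the row vector with entries $x_i^{-1}$ if $x_i\ne\mathbb{0}$ and $\mathbb{0}$ otherwise. For a nonzero matrix $\bm{A}=(a_{ij})$, $\bm{A}^{-}=(a^{-}_{ij})$ with $a^{-}_{ij}=a_{ji}^{-1}$ if $a_{ji}\neq\mathbb{0}$ and $\mathbb{0}$ otherwise. The trace is $\mathrm{tr}\,\bm{A}=a_{11}\oplus\cdots\oplus a_{nn}$. The distance between square matrices is $d(\bm{A},\bm{B})=\mathrm{tr}(\bm{B}^{-}\bm{A})\oplus\mathrm{tr}(\bm{A}^{-}\bm{B})$. $\bm{I}$ is the identity matrix, $\bm{A}^0=\bm{I}$, $\bm{A}^p=\bm{A}^{p-1}\bm{A}$. The spectral radius of $\bm{A}$ of order $n$ is $\lambda=\bigoplus_{k=1}^{n}\bigoplus_{1\le i_1,\ldots,i_k\le n}(a_{i_1i_2}a_{i_2i_3}\cdots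 a_{i_ki_1})^{1/k}$. For a square matrix $\bm{M}$ of order $n$, $\bm{M}^{\ast}=\bm{I}\oplus\bm{M}\oplus\cdots\oplus\bm{M}^{n-1}$. *)

(* Defs.v *)
From Stdlib Require Import ClassicalEpsilon.
From mathcomp Require Import all_boot.
Set Implicit Arguments. Unset Strict Implicit. Unset Printing Implicit Defensive.

Record idsemifield := IdSemifield {
  car :> eqType;
  sadd : car -> car -> car;
  smul : car -> car -> car;
  szero : car;
  sone : car;
  sinv : car -> car;
  saddA : forall x y z, sadd x (sadd y z) = sadd (sadd x y) z;
  saddC : forall x y, sadd x y = sadd y x;
  sadd0 : forall x, sadd szero x = x;
  smulA : forall x y z, smul x (smul y z) = smul (smul x y) z;
  smulC : forall x y, smul x y = smul y x;
  smul1 : forall x, smul sone x = x;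
  smul0 : forall x, smul szero x = szero;
  smulDl : forall x y z, smul (sadd x y) z = sadd (smul x z) (smul y z);
  saddxx : forall x, sadd x x = x;
  sone_neq0 : sone <> szero;
  smulV : forall x, x <> szero -> smul x (sinv x) = sone;
  (* linear order: x <= y iff x (+) y = y *)
  slinear : forall x y, sadd x y = x \/ sadd x y = y;
  salg_complete : forall (a : car) (p : nat), (0 < p)%N ->
      exists x, iter p (smul x) sone = a
}.

Section Ops.
Variable X : idsemifield.

Definition sle (x y : X) : Prop := sadd x y = y.
Definition spow (x : X) (p : nat) : X := iter p (smul x) (sone X).

(* the (unique) p-th root a^(1/p), p > 0, given by algebraic completeness *)
Definition sroot (p : nat) (a : X) : X :=
  epsilon (inhabits (szero X)) (fun x => spow x p = a).

Definition smat n := 'I_n -> 'I_n -> X.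
Definition svec n := 'I_n -> X.

Definition ssum (I : finType) (F : I -> X) : X := \big[@sadd X/szero X]_(i : I) F i.
Definition sprod (I : finType) (F : I -> X) : X := \big[@smul X/sone X]_(i : I) F i.

Definition mmul n (A B : smat n) : smat n := fun i j => ssum (fun k => smul (A i k) (B k j)).
Definition mvmul n (A : smat n) (x : svec n) : svec n := fun i => ssum (fun k => smul (A i k) (x k)).
Definition madd n (A B : smat n) : smat n := fun i j => sadd (A i j) (B i j).
Definition mscale n (a : X) (A : smat n) : smat n := fun i j => smul a (A i j).
Definition mid n : smat n := fun i j => if i == j then sone X else szero X.
Definition mpow n (A : smat n) (p : nat) : smat n := iter p (fun M => mmul M A) (@mid n).
Definition mtr n (A : smat n) : X := ssum (fun i => A i i).

Definition sinvz (a : X) : X := if a == szero X then szero X else sinv a.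
Definition vconj n (x : svec n) : svec n := fun i => sinvz (x i).
Definition mconj n (A : smat n) : smat n := fun i j => sinvz (A j i).
(* x x^- (column times row) *)
Definition outer_conj n (x : svec n) : smat n := fun i j => smul (x i) (vconj x j).

Definition mdist n (A B : smat n) : X := sadd (mtr (mmul (mconj B) A)) (mtr (mmul (mconj A) B)).

Definition regular n (x : svec n) : Prop := forall i, x i <> szero X.
Definition nonzero_vec n (x : svec n) : Prop := exists i, x i <> szero X.

Definition kstar n (M : smat n) : smat n :=
  fun i j => \big[@sadd X/szero X]_(p < n) mpow M p i j.

Definition spec_radius n (A : smat n) : X :=
  \big[@sadd X/szero X]_(k < n)
    ssum (fun f : {ffun 'I_k.+1 -> 'I_n} =>
      sroot k.+1 (sprod (fun j : 'I_k.+1 => A (f j) (f (ordS j))))).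

End Ops.

(* Main.v *)
From HB Require Import structures.
Require Import Defs.
From mathcomp Require Import all_boot zify.
From Stdlib Require Import FunctionalExtensionality Ring ClassicalEpsilon.
Set Implicit Arguments. Unset Strict Implicit. Unset Printing Implicit Defensive.

Section S.
Variable X : idsemifield.

Lemma smul0r (x : X) : smul x (szero X) = szero X.
Proof. by rewrite smulC smul0. Qed.
Lemma smulDr (x y z : X) : smul x (sadd y z) = sadd (smul x y) (smul x z).
Proof. by rewrite smulC smulDl !(smulC x). Qed.

HB.instance Definition _ := Monoid.isComLaw.Build (car X) (szero X) (@sadd X) (@saddA X) (@saddC X) (@sadd0 X).
HB.instance Definition _ := Monoid.isComLaw.Build (car X) (sone X) (@smul X) (@smulA X) (@smulC X) (@smul1 X).
HB.instance Definition _ := Monoid.isMulLaw.Build (car X) (szero X) (@smul X) (@smul0 X) smul0r.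
HB.instance Definition _ := Monoid.isAddLaw.Build (car X) (@smul X) (@sadd X) (@smulDl X) smulDr.

Lemma Xsrth : semi_ring_theory (szero X) (sone X) (@sadd X) (@smul X) (@eq X).
Proof.
constructor; intros; rewrite ?sadd0 ?smul1 ?smul0 //.
- by rewrite saddC.
- by rewrite saddA.
- by rewrite smulC.
- by rewrite smulA.
- by rewrite smulDl.
Qed.
Add Ring Xring : Xsrth.

Implicit Types x y z w c : X.

Lemma le_refl x : sle x x. Proof. exact: saddxx. Qed.
Lemma le_trans x y z : sle x y -> sle y z -> sle x z.
Proof. by rewrite /sle => h1 h2; rewrite -h2 saddA h1. Qed.
Lemma le_anti x y : sle x y -> sle y x -> x = y.
Proof. by rewrite /sle => h1 h2; rewrite -h1 -{1}h2 saddC. Qed.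
Lemma le_total x y : sle x y \/ sle y x.
Proof. rewrite /sle; case: (slinear x y) => h; [right; by rewrite saddC|by left]. Qed.
Lemma le_addl x y : sle x (sadd x y).
Proof. by rewrite /sle saddA saddxx. Qed.
Lemma le_addr x y : sle y (sadd x y).
Proof. by rewrite saddC; apply: le_addl. Qed.
Lemma le_lub x y z : sle x z -> sle y z -> sle (sadd x y) z.
Proof. by rewrite /sle => h1 h2; rewrite -saddA h2 h1. Qed.
Lemma le0 x : sle (szero X) x. Proof. exact: sadd0. Qed.
Lemma le_mulr x y z : sle x y -> sle (smul x z) (smul y z).
Proof. by rewrite /sle => h; rewrite -smulDl h. Qed.
Lemma le_mull x y z : sle x y -> sle (smul z x) (smul z y).
Proof. by rewrite !(smulC z); apply: le_mulr. Qed.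
Lemma le_mul x y z w : sle x y -> sle z w -> sle (smul x z) (smul y w).
Proof. move=> h1 h2; apply: (le_trans (le_mulr z h1)); exact: le_mull. Qed.
Lemma le0_eq x : sle x (szero X) -> x = szero X.
Proof. by rewrite /sle saddC sadd0. Qed.
Lemma le_nz x y : sle x y -> x <> szero X -> y <> szero X.
Proof. by move=> h hx hy; apply: hx; apply: le0_eq; rewrite -hy. Qed.
Lemma mul_nz x y : x <> szero X -> y <> szero X -> smul x y <> szero X.
Proof.
move=> hx hy h; apply: hy.
have -> : y = smul (smul x (sinv x)) y by rewrite smulV // smul1.
by rewrite -smulA (smulC (sinv x)) smulA h smul0.
Qed.
Lemma inv_nz x : x <> szero X -> sinv x <> szero X.
Proof. by move=> hx h; apply: (@sone_neq0 X); rewrite -(smulV hx) h smul0r. Qed.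
Lemma inv_uniq x y : smul y x = sone X -> x <> szero X -> y = sinv x.
Proof.
move=> h hx; have -> : y = smul y (smul x (sinv x)) by rewrite smulV // smulC smul1.
by rewrite smulA h smul1.
Qed.
Lemma invK x : x <> szero X -> sinv (sinv x) = x.
Proof. by move=> hx; symmetry; apply: inv_uniq; [exact: smulV|exact: inv_nz]. Qed.
Lemma invM x y : x <> szero X -> y <> szero X -> sinv (smul x y) = smul (sinv x) (sinv y).
Proof.
move=> hx hy; symmetry; apply: inv_uniq; last exact: mul_nz.
have -> : smul (smul (sinv x) (sinv y)) (smul x y) = smul (smul x (sinv x)) (smul y (sinv y)) by ring.
by rewrite !smulV // smul1.
Qed.
Lemma sinvzE x : x <> szero X -> sinvz x = sinv x.
Proof. by rewrite /sinvz; case: eqP. Qed.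
Lemma le_cancel c x y : c <> szero X -> sle (smul c x) y -> sle x (smul (sinv c) y).
Proof.
move=> hc h; have -> : x = smul (sinv c) (smul c x).
  by rewrite smulA (smulC (sinv c)) smulV // smul1.
exact: le_mull.
Qed.

Lemma le_big (I : finType) (F : I -> X) i : sle (F i) (\big[@sadd X/szero X]_(j : I) F j).
Proof. by rewrite (bigD1 i) //=; apply: le_addl. Qed.
Lemma big_lub (I : finType) (F : I -> X) c :
  (forall i, sle (F i) c) -> sle (\big[@sadd X/szero X]_(j : I) F j) c.
Proof. move=> h; apply: (big_ind (fun v => sle v c)) => //; [exact: le0|move=> ? ?; exact: le_lub]. Qed.

Lemma spowS x p : spow x p.+1 = smul x (spow x p). Proof. by []. Qed.
Lemma spow_le x y p : sle x y -> sle (spow x p) (spow y p).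
Proof. move=> h; elim: p => [|p IH]; [exact: le_refl|rewrite !spowS; exact: le_mul]. Qed.
Lemma spow_nz x p : x <> szero X -> spow x p <> szero X.
Proof. move=> h; elim: p => [|p IH]; [exact: sone_neq0|rewrite spowS; exact: mul_nz]. Qed.
Lemma spowM x y p : spow (smul x y) p = smul (spow x p) (spow y p).
Proof. elim: p => [|p IH]; first by rewrite /= smul1. by rewrite !spowS IH; ring. Qed.
Lemma spow1 p : spow (sone X) p = sone X.
Proof. by elim: p => // p IH; rewrite spowS IH smul1. Qed.
Lemma spow0 p : (0 < p)%N -> spow (szero X) p = szero X.
Proof. by case: p => // p _; rewrite spowS smul0. Qed.
Lemma spow_nz_inv x p : (0 < p)%N -> spow x p <> szero X -> x <> szero X.
Proof. by move=> hp h hx; apply: h; rewrite hx spow0. Qed.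

Lemma root_mono (r q : X) p : (0 < p)%N -> sle (spow r p) (spow q p) -> sle r q.
Proof.
move=> hp h; case: (le_total r q) => // hqr.
have e : spow q p = spow r p by apply: le_anti => //; apply: spow_le.
case: p hp h e => // p _ h e.
case: (eqVneq r (szero X)) => [er|hr]; first by rewrite er in hqr *; rewrite (le0_eq hqr); apply: le_refl.
have hrp : spow r p <> szero X by apply: spow_nz; apply/eqP.
have s1 : sle (spow q p.+1) (smul q (spow r p)) by rewrite spowS; apply: le_mull; apply: spow_le.
have s2 : sle (smul q (spow r p)) (spow r p.+1) by rewrite spowS; apply: le_mulr.
have e2 : smul q (spow r p) = smul r (spow r p).
  by apply: le_anti => //; rewrite -spowS -e.
have -> : r = smul (smul r (spow r p)) (sinv (spow r p)) by rewrite -smulA smulV // smulC smul1.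
by rewrite -e2 -smulA smulV // smulC smul1; apply: le_refl.
Qed.

Lemma sroot_spec p (a : X) : (0 < p)%N -> spow (sroot p a) p = a.
Proof.
move=> hp; rewrite /sroot; apply: (epsilon_spec (inhabits (szero X)) (fun x => spow x p = a)).
exact: salg_complete.
Qed.


Section Paths.
Variable n : nat.
Implicit Types (M : smat X n) (f g : nat -> 'I_n).

Definition W M f a b := \big[@smul X/sone X]_(a <= t < b) M (f t) (f t.+1).

Lemma W_recr M f a b : (a <= b)%N -> W M f a b.+1 = smul (W M f a b) (M (f b) (f b.+1)).
Proof. by move=> h; rewrite /W big_nat_recr. Qed.
Lemma W_nil M f a : W M f a a = sone X.
Proof. by rewrite /W big_geq. Qed.
Lemma W_cat M f a b d : (a <= b)%N -> (b <= d)%N -> W M f a d = smul (W M f a b) (W M f b d).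
Proof. by move=> h1 h2; rewrite /W (big_cat_nat h1 h2). Qed.
Lemma eq_W M f g a b : (forall t, (a <= t)%N -> (t < b)%N -> f t = g t /\ f t.+1 = g t.+1) ->
  W M f a b = W M g a b.
Proof.
move=> h; apply: eq_big_nat => t /andP[h1 h2]; by case: (h t h1 h2) => -> ->.
Qed.

Lemma mpowS M p : mpow M p.+1 = mmul (mpow M p) M. Proof. by []. Qed.

Lemma path_le M f p : sle (W M f 0 p) (mpow M p (f 0%N) (f p)).
Proof.
elim: p => [|p IH]; first by rewrite W_nil /mpow /= /mid eqxx; apply: le_refl.
rewrite W_recr // mpowS /mmul /ssum.
apply: le_trans (le_big _ (f p)); exact: le_mulr.
Qed.

Lemma path_bound M p : forall i j c,
  (forall f, f 0%N = i -> f p = j -> sle (W M f 0 p) c) -> sle (mpow M p i j) c.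
Proof.
elim: p => [|p IH] i j c h.
  rewrite /mpow /= /mid; case: eqP => [e|_]; last exact: le0.
  by rewrite -(W_nil M (fun _ => i) 0); apply: (h (fun _ => i)); rewrite // e.
rewrite mpowS /mmul /ssum; apply: big_lub => k.
case: (eqVneq (M k j) (szero X)) => [->|hk]; first by rewrite smul0r; apply: le0.
have hk' : M k j <> szero X by apply/eqP.
have : sle (mpow M p i k) (smul c (sinv (M k j))).
  apply: IH => f f0 fp; rewrite smulC; apply: le_cancel => //.
  pose f' t := if t == p.+1 then j else f t.
  have := h f'; rewrite /f' /= f0 eqxx => /(_ erefl erefl).
  have hpp : (p == p.+1) = false by apply/eqP; lia.
  rewrite W_recr // eqxx hpp.
  have -> : W M (fun t => if t == p.+1 then j else f t) 0 p = W M f 0 p.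
    apply: eq_W => t _ ht; rewrite !ifN //; apply/negP => /eqP ?; lia.
  by rewrite fp smulC.
by move=> /(le_mulr (M k j)); rewrite -smulA (smulC (sinv _)) smulV // (smulC c) smul1.
Qed.


Lemma star_bound M (hn : (0 < n)%N)
  (H : forall f a b, (a < b)%N -> (b - a <= n)%N -> f a = f b -> sle (W M f a b) (sone X)) :
  forall p i j, sle (mpow M p i j) (kstar M i j).
Proof.
move=> p0; elim: p0.+1 {-2}p0 (ltnSn p0) => // N IH p hp i j.
apply: path_bound => f f0 fp.
case: (ltnP p n) => hpn.
  apply: le_trans (path_le M f p) _; rewrite f0 fp /kstar.
  exact: (le_big (fun q : 'I_n => mpow M q i j) (Ordinal hpn)).
have : ~~ injectiveb (fun t : 'I_n.+1 => f t).
  by apply/negP => /injectiveP /leq_card; rewrite !card_ord ltnn.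
case/injectivePn => t1 [t2 ht ft].
have [a [b [hab [hbn fab]]]] : exists a b, (a < b)%N /\ (b <= n)%N /\ f a = f b.
  case: (ltngtP t1 t2) => h.
  - by exists t1, t2; split => //; split => //; rewrite -ltnS.
  - by exists t2, t1; split => //; split => //; rewrite -ltnS.
  - by move: ht; rewrite (val_inj h) eqxx.
pose d := (b - a)%N.
pose q := (p - d)%N.
pose g t := if (t < a)%N then f t else f (t + d)%N.
have e1 : W M f 0 p = smul (W M f 0 a) (smul (W M f a b) (W M f b p)).
  rewrite (@W_cat M f 0 a p) // ?(@W_cat M f a b p) //; lia.
have e2 : W M g 0 q = smul (W M f 0 a) (W M f b p).
  rewrite (@W_cat M g 0 a q) //; last by lia.
  congr smul.
    apply: eq_W => t _ ht'; rewrite /g ht'; split => //.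
    case: ifP => // hta; have -> : t.+1 = a by lia.
    by rewrite fab; congr f; lia.
  have eb : b = (a + d)%N by lia.
  rewrite eb /W big_addn; apply: eq_big_nat => t /andP[ht1 ht2].
  rewrite /g; have -> : (t < a)%N = false by lia.
  have -> : (t.+1 < a)%N = false by lia.
  by rewrite addSn.
have hle : sle (W M f 0 p) (W M g 0 q).
  rewrite e1 e2; apply: le_mull.
  have := H f a b hab ltac:(lia) fab => /(le_mulr (W M f b p)); by rewrite smul1.
apply: le_trans hle _; apply: le_trans (path_le M g q) _.
have -> : g 0%N = i.
  rewrite /g; case: ifP => h0; first by [].
  have -> : (0 + d)%N = b by lia.
  by rewrite -fab; have -> : a = 0%N by lia.
have -> : g q = j.
  rewrite /g; have -> : (q < a)%N = false by lia.
  by rewrite -fp; congr f; lia.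
apply: IH; lia.
Qed.


Definition hmod k (c : {ffun 'I_k.+1 -> 'I_n}) (t : nat) : 'I_n :=
  c (Ordinal (@ltn_pmod t k.+1 isT)).

Lemma cyc_W M k (c : {ffun 'I_k.+1 -> 'I_n}) :
  sprod (fun j : 'I_k.+1 => M (c j) (c (ordS j))) = W M (hmod c) 0 k.+1.
Proof.
rewrite /W big_mkord /sprod; apply: eq_bigr => j _; rewrite /hmod.
by congr (M (c _) (c _)); apply: val_inj => //=; rewrite modn_small.
Qed.

Lemma W_scale M cc f a k : W (mscale cc M) f a (a + k) = smul (spow cc k) (W M f a (a + k)).
Proof.
elim: k => [|k IH]; first by rewrite addn0 !W_nil smul1.
rewrite addnS !W_recr ?leq_addr // IH spowS /mscale; ring.
Qed.

Lemma cycle_le_mu M f a b : (a < b)%N -> (b - a <= n)%N -> f a = f b ->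
  sle (W M f a b) (spow (spec_radius M) (b - a)).
Proof.
move=> hab hbn fab.
pose h t := f (t + a)%N.
have e : W M f a b = W M h 0 (b - a).
  by rewrite /W -{1}(add0n a) big_addn; apply: eq_bigr => t _; rewrite /h addSn.
rewrite e; have [k ek] : exists k, (b - a)%N = k.+1 by exists (b - a).-1; lia.
rewrite ek; pose c := [ffun j : 'I_k.+1 => h j].
have e2 : W M h 0 k.+1 = W M (hmod c) 0 k.+1.
  apply: eq_W => t _ ht; rewrite /hmod !ffunE /=; split; first by rewrite modn_small.
  case: (ltnP t.+1 k.+1) => h1; first by rewrite modn_small.
  have -> : t.+1 = k.+1 by lia.
  by rewrite modnn /h add0n fab; congr f; lia.
rewrite e2 -cyc_W.
set s := sprod _.
have hk : (k < n)%N by lia.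
have hr : sle (sroot k.+1 s) (spec_radius M).
  rewrite /spec_radius.
  apply: le_trans (le_big (fun k0 : 'I_n => ssum (fun f0 : {ffun 'I_k0.+1 -> 'I_n} =>
      sroot k0.+1 (sprod (fun j : 'I_k0.+1 => M (f0 j) (f0 (ordS j)))))) (Ordinal hk)).
  exact: (le_big (fun f0 : {ffun 'I_k.+1 -> 'I_n} =>
      sroot k.+1 (sprod (fun j : 'I_k.+1 => M (f0 j) (f0 (ordS j))))) c).
rewrite -(@sroot_spec k.+1 s) //; exact: spow_le.
Qed.

Lemma mu_nz M (hn : (0 < n)%N) (hM : forall i j, M i j <> szero X) : spec_radius M <> szero X.
Proof.
pose i0 := Ordinal hn; pose c := [ffun _ : 'I_1 => i0].
have h : sle (sroot 1 (M i0 i0)) (spec_radius M).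
  rewrite /spec_radius.
  apply: le_trans (le_big (fun k0 : 'I_n => ssum (fun f0 : {ffun 'I_k0.+1 -> 'I_n} =>
      sroot k0.+1 (sprod (fun j : 'I_k0.+1 => M (f0 j) (f0 (ordS j)))))) (Ordinal hn)).
  apply: le_trans (le_big (fun f0 : {ffun 'I_1 -> 'I_n} =>
      sroot 1 (sprod (fun j : 'I_1 => M (f0 j) (f0 (ordS j))))) c).
  by rewrite /sprod big_ord1 !ffunE; apply: le_refl.
apply: le_nz h _; apply: (@spow_nz_inv _ 1) => //.
rewrite sroot_spec //; exact: hM.
Qed.

Lemma scaled_cycle M (hn : (0 < n)%N) (hM : forall i j, M i j <> szero X) f a b :
  (a < b)%N -> (b - a <= n)%N -> f a = f b ->
  sle (W (mscale (sinv (spec_radius M)) M) f a b) (sone X).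
Proof.
move=> hab hbn fab; have eb : b = (a + (b - a))%N by lia.
rewrite eb W_scale -eb.
have := mu_nz hn hM => hmu.
have -> : sone X = smul (spow (sinv (spec_radius M)) (b - a)) (spow (spec_radius M) (b - a)).
  by rewrite -spowM smulC smulV // spow1.
apply: le_mull; exact: cycle_le_mu.
Qed.


Definition Qf M (x : svec X n) : X :=
  ssum (fun i => ssum (fun k => smul (smul (sinv (x i)) (M i k)) (x k))).

Lemma Qf_term M (x : svec X n) i k : sle (smul (smul (sinv (x i)) (M i k)) (x k)) (Qf M x).
Proof.
rewrite /Qf /ssum.
apply: le_trans (le_big (fun i0 => \big[@sadd X/szero X]_(k0 : 'I_n)
   smul (smul (sinv (x i0)) (M i0 k0)) (x k0)) i).
exact: (le_big (fun k0 => smul (smul (sinv (x i)) (M i k0)) (x k0)) k).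
Qed.

Lemma tele M (x : svec X n) (hx : regular x) g p :
  sle (W M g 0 p) (smul (smul (x (g 0%N)) (spow (Qf M x) p)) (sinv (x (g p)))).
Proof.
elim: p => [|p IH].
  rewrite W_nil; have -> : smul (smul (x (g 0%N)) (spow (Qf M x) 0)) (sinv (x (g 0%N)))
     = smul (x (g 0%N)) (sinv (x (g 0%N))) by rewrite /= ; ring.
  by rewrite smulV //; apply: le_refl.
rewrite W_recr //.
set a := g p; set b := g p.+1.
have hab : sle (M a b) (smul (smul (x a) (Qf M x)) (sinv (x b))).
  have -> : M a b = smul (smul (x a) (smul (smul (sinv (x a)) (M a b)) (x b))) (sinv (x b)).
    have -> : smul (smul (x a) (smul (smul (sinv (x a)) (M a b)) (x b))) (sinv (x b))
      = smul (smul (smul (x a) (sinv (x a))) (smul (x b) (sinv (x b)))) (M a b) by ring.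
    by rewrite !smulV // smul1 smul1.
  apply: le_mulr; apply: le_mull; exact: Qf_term.
apply: le_trans (le_mul IH hab) _.
have -> : smul (smul (smul (x (g 0%N)) (spow (Qf M x) p)) (sinv (x a)))
      (smul (smul (x a) (Qf M x)) (sinv (x b)))
  = smul (smul (x a) (sinv (x a))) (smul (smul (x (g 0%N)) (spow (Qf M x) p.+1)) (sinv (x b))).
  rewrite spowS; ring.
by rewrite smulV // smul1; apply: le_refl.
Qed.

Lemma lower M (x : svec X n) (hx : regular x) : sle (spec_radius M) (Qf M x).
Proof.
rewrite /spec_radius; apply: big_lub => k; rewrite /ssum; apply: big_lub => c.
apply: (@root_mono _ _ k.+1) => //; rewrite sroot_spec // cyc_W.
apply: le_trans (tele M hx _ _) _.
have -> : hmod c k.+1 = hmod c 0%N.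
  by rewrite /hmod; congr (c _); apply: val_inj => /=; rewrite modnn mod0n.
have -> : smul (smul (x (hmod c 0)) (spow (Qf M x) k.+1)) (sinv (x (hmod c 0)))
   = smul (smul (x (hmod c 0)) (sinv (x (hmod c 0)))) (spow (Qf M x) k.+1) by ring.
by rewrite smulV // smul1; apply: le_refl.
Qed.

Lemma Q_iff M mu (x : svec X n) (hmu : mu <> szero X) (hx : regular x) :
  sle (Qf M x) mu <-> forall i, sle (mvmul (mscale (sinv mu) M) x i) (x i).
Proof.
split.
- move=> h i; rewrite /mvmul /ssum; apply: big_lub => k; rewrite /mscale.
  have := le_trans (Qf_term M x i k) h => /(le_mulr (smul (sinv mu) (x i))).
  have -> : smul (smul (smul (sinv (x i)) (M i k)) (x k)) (smul (sinv mu) (x i))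
    = smul (smul (x i) (sinv (x i))) (smul (smul (sinv mu) (M i k)) (x k)) by ring.
  have -> : smul mu (smul (sinv mu) (x i)) = smul (smul mu (sinv mu)) (x i) by ring.
  by rewrite !smulV // !smul1.
- move=> h; rewrite /Qf /ssum; apply: big_lub => i; apply: big_lub => k.
  have h1 : sle (smul (smul (sinv mu) (M i k)) (x k)) (x i).
    apply: le_trans (h i); rewrite /mvmul /ssum /mscale.
    exact: (le_big (fun k0 => smul (smul (sinv mu) (M i k0)) (x k0)) k).
  have := le_mull (smul mu (sinv (x i))) h1.
  have -> : smul (smul mu (sinv (x i))) (smul (smul (sinv mu) (M i k)) (x k))
    = smul (smul mu (sinv mu)) (smul (smul (sinv (x i)) (M i k)) (x k)) by ring.
  have -> : smul (smul mu (sinv (x i))) (x i) = smul mu (smul (x i) (sinv (x i))) by ring.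
  by rewrite !smulV // smul1 (smulC mu) smul1.
Qed.


Lemma star_ii M (hn : (0 < n)%N) i : sle (sone X) (kstar M i i).
Proof.
rewrite /kstar; apply: le_trans (le_big (fun q : 'I_n => mpow M q i i) (Ordinal hn)).
by rewrite /= /mid eqxx; apply: le_refl.
Qed.

Lemma star_super M (hn : (0 < n)%N)
  (H : forall f a b, (a < b)%N -> (b - a <= n)%N -> f a = f b -> sle (W M f a b) (sone X))
  (hM : forall i j, M i j <> szero X) (u : svec X n) i :
  sle (mvmul M (mvmul (kstar M) u) i) (mvmul (kstar M) u i).
Proof.
rewrite {1}/mvmul /ssum; apply: big_lub => k; rewrite /mvmul /ssum big_distrr; apply: big_lub => j.
apply: le_trans (le_big (fun j0 => smul (kstar M i j0) (u j0)) j).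
rewrite /=.
rewrite smulA; apply: le_mulr.
rewrite {1}/kstar big_distrr; apply: big_lub => p.
have : sle (mpow M p k j) (smul (sinv (M i k)) (kstar M i j)).
  apply: path_bound => f f0 fp; apply: le_cancel => //.
  pose f' t := if t is t'.+1 then f t' else i.
  have -> : smul (M i k) (W M f 0 p) = W M f' 0 p.+1 by rewrite /W big_nat_recl //= f0.
  apply: le_trans (path_le M f' p.+1) _; rewrite /= fp.
  exact: (star_bound hn H p.+1).
move=> /(le_mull (M i k)); rewrite smulA smulV // smul1.
by [].
Qed.

Lemma star_regular M (hn : (0 < n)%N) (hM : forall i j, M i j <> szero X) (u : svec X n) :
  nonzero_vec u -> regular (mvmul (kstar M) u).
Proof.
case=> j0 hj0 i; rewrite /mvmul /ssum.
apply: le_nz (le_big (fun j => smul (kstar M i j) (u j)) j0) _; apply: mul_nz => //.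
case: (eqVneq i j0) => [<-|hij].
  by apply: le_nz (star_ii M hn i) _; apply: sone_neq0.
have h1 : (1 < n)%N.
  case: i j0 hij {hj0} => [i hi] [j hj] /=; rewrite -val_eqE /= => hij; lia.
pose f t := if t == 0%N then i else j0.
apply: le_nz (le_big (fun q : 'I_n => mpow M q i j0) (Ordinal h1)) _.
apply: le_nz (path_le M f 1) _.
by rewrite W_recr // W_nil smul1 /f /=; apply: hM.
Qed.

Lemma fix_star M (hn : (0 < n)%N) (x : svec X n) (h : forall i, sle (mvmul M x i) (x i)) :
  mvmul (kstar M) x = x.
Proof.
have hp : forall p i j, sle (smul (mpow M p i j) (x j)) (x i).
  elim=> [|p IH] i j.
    rewrite /= /mid; case: eqP => [->|_]; first by rewrite smul1; apply: le_refl.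
    by rewrite smul0; apply: le0.
  rewrite mpowS /mmul /ssum big_distrl; apply: big_lub => k.
  rewrite /= -smulA; apply: le_trans (IH i k); apply: le_mull.
  apply: le_trans (h k); rewrite /mvmul /ssum.
  exact: (le_big (fun k0 => smul (M k k0) (x k0)) j).
apply: functional_extensionality => i; apply: le_anti.
  rewrite /mvmul /ssum; apply: big_lub => j; rewrite /kstar big_distrl.
  apply: big_lub => p; exact: hp.
rewrite /mvmul /ssum; apply: le_trans (le_big (fun j => smul (kstar M i j) (x j)) i).
rewrite -{1}(smul1 (x i)); apply: le_mulr; exact: star_ii.
Qed.


Lemma big3 m (f : 'I_m -> 'I_n -> 'I_n -> X) :
  \big[@sadd X/szero X]_(l < m) \big[@sadd X/szero X]_(i : 'I_n) \big[@sadd X/szero X]_(k : 'I_n) f l i k =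
  \big[@sadd X/szero X]_(i : 'I_n) \big[@sadd X/szero X]_(k : 'I_n) \big[@sadd X/szero X]_(l < m) f l i k.
Proof. rewrite exchange_big; apply: eq_bigr => i _; exact: exchange_big. Qed.

Lemma F_eq_Q m (A : 'I_m -> smat X n) (x : svec X n) (hx : regular x) :
  \big[@sadd X/szero X]_(l < m) mdist (A l) (outer_conj x) =
  Qf (fun i j => \big[@sadd X/szero X]_(l < m) sadd (A l i j) (mconj (A l) i j)) x.
Proof.
have hO : forall i k, mconj (outer_conj x) i k = smul (x i) (sinv (x k)).
  move=> i k; rewrite /mconj /outer_conj /vconj (sinvzE (hx i)).
  rewrite sinvzE; last by apply: mul_nz => //; apply: inv_nz.
  by rewrite invM ?invK //; [ring | apply: inv_nz].
have hO2 : forall i k, outer_conj x i k = smul (x i) (sinv (x k)).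
  by move=> i k; rewrite /outer_conj /vconj sinvzE.
have e1 : forall l, mdist (A l) (outer_conj x) =
   sadd (\big[@sadd X/szero X]_(i : 'I_n) \big[@sadd X/szero X]_(k : 'I_n)
           smul (smul (sinv (x i)) (A l i k)) (x k))
        (\big[@sadd X/szero X]_(i : 'I_n) \big[@sadd X/szero X]_(k : 'I_n)
           smul (smul (sinv (x i)) (mconj (A l) i k)) (x k)).
  move=> l; rewrite /mdist /mtr /mmul /ssum; congr sadd.
    rewrite exchange_big; apply: eq_bigr => i _; apply: eq_bigr => k _.
    by rewrite hO; ring.
  apply: eq_bigr => i _; apply: eq_bigr => k _; rewrite hO2 /mconj; ring.
rewrite (eq_bigr _ (fun l _ => e1 l)) big_split /= !big3 /Qf /ssum -big_split /=.
apply: eq_bigr => i _; rewrite -big_split /=; apply: eq_bigr => k _.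
rewrite -big_split /= big_distrr /= big_distrl /=; apply: eq_bigr => l _; ring.
Qed.

End Paths.
End S.

Unset Implicit Arguments.

Theorem theorem2 (X : idsemifield) (n m : nat) (A : 'I_m -> smat X n)
  (hn : (0 < n)%N)
  (B := fun i j => \big[@sadd X/szero X]_(l < m) sadd (A l i j) (mconj (A l) i j))
  (hB : forall i j, B i j <> szero X)
  (mu := spec_radius B)
  (Bmu := mscale (sinv mu) B)
  (F := fun x : svec X n => \big[@sadd X/szero X]_(l < m) mdist (A l) (outer_conj x)) :
  (forall x : svec X n, regular x -> sle mu (F x)) /\
  (exists x : svec X n, regular x /\ F x = mu) /\
  (forall x : svec X n,
     (regular x /\ F x = mu) <->
     (exists u : svec X n, nonzero_vec u /\ x = mvmul (kstar Bmu) u)).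
Proof.
have hmu : mu <> szero X := mu_nz hn hB.
have Hcyc := scaled_cycle hn hB.
have hBmu : forall i j, Bmu i j <> szero X.
  by move=> i j; apply: mul_nz; [apply: inv_nz | apply: hB].
have hF : forall x, regular x -> F x = Qf B x.
  by move=> x hx; exact: (F_eq_Q A hx).
have key : forall u, nonzero_vec u -> regular (mvmul (kstar Bmu) u) /\ F (mvmul (kstar Bmu) u) = mu.
  move=> u hu; have hr := star_regular hn hBmu hu; split => //.
  rewrite hF //; apply: le_anti; last exact: lower.
  apply/(Q_iff B hmu hr); exact: (star_super hn Hcyc hBmu u).
split; first by move=> x hx; rewrite hF //; exact: lower.
split.
  exists (mvmul (kstar Bmu) (fun _ => sone X)); apply: key.
  by exists (Ordinal hn); apply: sone_neq0.
move=> x; split; last by case=> u [hu ->]; apply: key.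
case=> hx hFx; exists x; split; first by exists (Ordinal hn); apply: hx.
symmetry; apply: (fix_star (M := Bmu) hn).
apply/(Q_iff B hmu hx); rewrite -hF // hFx; exact: le_refl.
Qed.
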